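(* Let $Q\in\mathcal N_\kappa(\mathcal H)$ have the realization $Q(z)=Q(z_0)^*+(z-\overline{z_0})\Gamma^+\big(I+(z-z_0)(A-z)^{-1}\big)\Gamma$ with $Q(z_0)$ boundedly invertible, let $\widehat Q(z):=-Q(z)^{-1}$, $\Gamma_z:=\big(I+(z-z_0)(A-z)^{-1}\big)\Gamma$, $\widehat\Gamma:=\Gamma\widehat Q(z_0)=-\Gamma Q(z_0)^{-1}$, and let $\widehat A$ be the relation with $$(\widehat A-z)^{-1}=(A-z)^{-1}+\Gamma_z\widehat Q(z)\Gamma_{\overline z}^+ ,$$ so that $\widehat Q(z)=\widehat Q(z_0)^*+(z-\overline{z_0})\widehat\Gamma^+\big(I+(z-z_0)(\widehat A-z)^{-1}\big)\widehat\Gamma$. Define $\widehat\Gamma_z:=\big(I+(z-z_0)(\widehat A-z)^{-1}\big)\widehat\Gamma$. Then, for all $z\in\varrho(A)\cap\varrho(\widehat A)$ at which $Q(z)$ is boundedly invertible, $$\widehat\Gamma_z=\Gamma_z\widehat Q(z)\qquad\text{and}\qquad (A-z)^{-1}=(\widehat A-z)^{-1}+\widehat\Gamma_zQ(z)\widehat\Gamma_{\overline z}^+ .$$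
   Context: $\mathcal H$ is a Hilbert space. $Q\in\mathcal N_\kappa(\mathcal H)$: an $\mathcal L(\mathcal H)$-valued function meromorphic in $\mathbb C\setminus\mathbb R$, $Q(\overline z)^*=Q(z)$, whose kernel $\frac{Q(z)-Q(w)^*}{z-\overline w}$ on $\mathcal D(Q)\cap\mathbb C^+$ has exactly $\kappa$ negative squares. The realization consists of a Pontryagin space $(\mathcal K,[\cdot,\cdot])$, a self-adjoint linear relation $A$ in $\mathcal K$, a point $z_0\in\varrho(A)\cap\mathbb C^+$ and a bounded $\Gamma:\mathcal H\to\mathcal K$; $\Gamma^+$ denotes the adjoint with respect to the Pontryagin inner product. *)

(* Defs.v *)
From HB Require Import structures.
From mathcomp Require Import all_boot all_order all_algebra.
From mathcomp Require Import reals.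
From mathcomp Require Import complex.
From Stdlib Require Import ClassicalEpsilon.
Set Implicit Arguments. Unset Strict Implicit. Unset Printing Implicit Defensive.
Import Order.TTheory GRing.Theory Num.Theory.
Local Open Scope ring_scope.

Section Defs.
Variable R : realType.
Local Notation C := R[i].

Definition lin_map (X Y : lmodType C) (f : X -> Y) : Prop :=
  forall (a : C) (x y : X), f (a *: x + y) = a *: f x + f y.

Definition hermitian_form (X : lmodType C) (ip : X -> X -> C) : Prop :=
  (forall (a : C) (x y z : X), ip (a *: x + y) z = a * ip x z + ip y z) /\
  (forall x y : X, ip y x = (ip x y)^*).

Definition complete_on (X : lmodType C) (ip : X -> X -> C) (S : X -> Prop) : Prop :=
  forall u : nat -> X, (forall n, S (u n)) ->
    (forall e : R, 0 < e -> exists N : nat, forall m n : nat, (N <= m)%N -> (N <= n)%N ->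
        ip (u m - u n) (u m - u n) < (e%:C)%C) ->
    exists l : X, S l /\
      forall e : R, 0 < e -> exists N : nat, forall n : nat, (N <= n)%N ->
        ip (u n - l) (u n - l) < (e%:C)%C.

Definition hilbert (X : lmodType C) (ip : X -> X -> C) : Prop :=
  [/\ hermitian_form ip,
      (forall x : X, x != 0 -> 0 < ip x x) &
      complete_on ip (fun _ => True)].

(* ---------- Pontryagin space ----------
   P is the projection onto K+ along K- of a fundamental decomposition
   K = K+ [+] K-, with (K+, ip) a Hilbert space and (K-, -ip) a finite-dimensional
   Hilbert space. *)
Definition fundamental_proj (X : lmodType C) (ip : X -> X -> C) (P : X -> X) : Prop :=
  [/\ lin_map P /\ (forall x, P (P x) = P x),
      (forall x y, ip (P x) (y - P y) = 0),
      (forall x, P x = x -> x != 0 -> 0 < ip x x),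
      (forall x, P x = 0 -> x != 0 -> ip x x < 0) /\
      (exists (n : nat) (e : 'I_n -> X), forall x, exists c : 'I_n -> C,
          x - P x = \sum_(i < n) c i *: e i) &
      complete_on ip (fun x => P x = x)].

Definition pontryagin (X : lmodType C) (ip : X -> X -> C) : Prop :=
  hermitian_form ip /\ exists P, fundamental_proj ip P.

Definition jnorm2 (X : lmodType C) (ip : X -> X -> C) (P : X -> X) (x : X) : C :=
  ip (P x) (P x) - ip (x - P x) (x - P x).

(* bounded maps (w.r.t. the Hilbert norm of H, resp. a J-norm of K; all
   fundamental decompositions of a Pontryagin space give equivalent norms) *)
Definition bounded_HH (H : lmodType C) (ipH : H -> H -> C) (f : H -> H) : Prop :=
  exists M : R, forall x, ipH (f x) (f x) <= (M%:C)%C * ipH x x.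
Definition bounded_HK (H K : lmodType C) (ipH : H -> H -> C) (ipK : K -> K -> C)
  (f : H -> K) : Prop :=
  exists P, fundamental_proj ipK P /\
  exists M : R, forall x, jnorm2 ipK P (f x) <= (M%:C)%C * ipH x x.
Definition bounded_KK (K : lmodType C) (ipK : K -> K -> C) (f : K -> K) : Prop :=
  exists P, fundamental_proj ipK P /\
  exists M : R, forall x, jnorm2 ipK P (f x) <= (M%:C)%C * jnorm2 ipK P x.

Definition is_adj (X Y : lmodType C) (ipX : X -> X -> C) (ipY : Y -> Y -> C)
  (f : X -> Y) (g : Y -> X) : Prop := forall x y, ipY (f x) y = ipX x (g y).
Definition has_adj (X Y : lmodType C) (ipX : X -> X -> C) (ipY : Y -> Y -> C)
  (f : X -> Y) : Prop := exists g, is_adj ipX ipY f g.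
(* the adjoint f^+ (chosen; unique by nondegeneracy whenever it exists) *)
Definition adj (X Y : lmodType C) (ipX : X -> X -> C) (ipY : Y -> Y -> C)
  (f : X -> Y) : Y -> X :=
  epsilon (inhabits (fun _ => 0)) (is_adj ipX ipY f).

Definition is_inv (X : Type) (f g : X -> X) : Prop := cancel f g /\ cancel g f.
Definition bdd_invertible (H : lmodType C) (ipH : H -> H -> C) (f : H -> H) : Prop :=
  exists g, is_inv f g /\ lin_map g /\ bounded_HH ipH g.
Definition inv_op (X : Type) (f : X -> X) : X -> X :=
  epsilon (inhabits id) (is_inv f).

Definition linrel (K : lmodType C) (A : K -> K -> Prop) : Prop :=
  A 0 0 /\ forall (a : C) f g f' g', A f g -> A f' g' -> A (a *: f + f') (a *: g + g').
Definition selfadjoint (K : lmodType C) (ipK : K -> K -> C) (A : K -> K -> Prop) : Prop :=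
  forall f g, A f g <-> (forall h k, A h k -> ipK k f = ipK h g).
(* R is (the graph of) (A - z)^{-1} = {(g - z f, f) | (f,g) in A} *)
Definition is_resolvent (K : lmodType C) (A : K -> K -> Prop) (z : C) (Rz : K -> K) : Prop :=
  (forall f g, A f g -> Rz (g - z *: f) = f) /\ (forall k, A (Rz k) (k + z *: Rz k)).
Definition in_rho (K : lmodType C) (ipK : K -> K -> C) (A : K -> K -> Prop) (z : C) : Prop :=
  exists Rz, is_resolvent A z Rz /\ lin_map Rz /\ bounded_KK ipK Rz.
Definition resolv (K : lmodType C) (A : K -> K -> Prop) (z : C) : K -> K :=
  epsilon (inhabits id) (is_resolvent A z).

Definition Gam_z (H K : lmodType C) (A : K -> K -> Prop) (z0 : C) (Gam : H -> K) (z : C)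
  : H -> K := fun h => Gam h + (z - z0) *: resolv A z (Gam h).

Definition Qhat (H : lmodType C) (Q : C -> H -> H) (z : C) : H -> H :=
  fun h => - inv_op (Q z) h.

End Defs.

(* Main.v *)
Require Import Defs.
From HB Require Import structures.
From mathcomp Require Import all_boot all_order all_algebra.
From mathcomp Require Import reals.
From mathcomp Require Import complex.
From mathcomp Require Import ring lra.
From Stdlib Require Import ClassicalEpsilon FunctionalExtensionality.
Set Implicit Arguments. Unset Strict Implicit. Unset Printing Implicit Defensive.
Import Order.TTheory GRing.Theory Num.Theory.
Local Open Scope ring_scope.
Section Basics.
Variable R : realType.
Local Notation C := R[i].

Section Lin.
Variables (X Y : lmodType C) (f : X -> Y) (hf : lin_map f).
Lemma lin0 : f 0 = 0.
Proof. have := hf 1 0 0; rewrite !scale1r !addr0 => h; apply: (addrI (f 0)); by rewrite addr0 -h. Qed.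
Lemma linD x y : f (x + y) = f x + f y.
Proof. by have := hf 1 x y; rewrite !scale1r. Qed.
Lemma linZ a x : f (a *: x) = a *: f x.
Proof. by have := hf a x 0; rewrite !addr0 lin0 addr0. Qed.
Lemma linN x : f (- x) = - f x.
Proof. by rewrite -scaleN1r linZ scaleN1r. Qed.
Lemma linB x y : f (x - y) = f x - f y.
Proof. by rewrite linD linN. Qed.
End Lin.

Lemma lin_comp (X Y Z : lmodType C) (f : Y -> Z) (g : X -> Y) :
  lin_map f -> lin_map g -> lin_map (f \o g).
Proof. by move=> hf hg a x y /=; rewrite hg hf. Qed.

Section Form.
Variables (X : lmodType C) (ip : X -> X -> C) (hip : hermitian_form ip).
Lemma ipC x y : ip y x = (ip x y)^*.
Proof. by case: hip. Qed.
Lemma ip0l z : ip 0 z = 0.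
Proof. case: hip => h _; have := h 1 0 0 z; rewrite scale1r addr0 mul1r => e.
  apply: (addrI (ip 0 z)); by rewrite addr0 -e. Qed.
Lemma ipDl x y z : ip (x + y) z = ip x z + ip y z.
Proof. case: hip => h _; by have := h 1 x y z; rewrite scale1r mul1r. Qed.
Lemma ipZl a x z : ip (a *: x) z = a * ip x z.
Proof. case: hip => h _; by have := h a x 0 z; rewrite addr0 ip0l addr0. Qed.
Lemma ipNl x z : ip (- x) z = - ip x z.
Proof. by rewrite -scaleN1r ipZl mulN1r. Qed.
Lemma ipBl x y z : ip (x - y) z = ip x z - ip y z.
Proof. by rewrite ipDl ipNl. Qed.
Lemma ip0r z : ip z 0 = 0.
Proof. by rewrite ipC ip0l conjC0. Qed.
Lemma ipDr x y z : ip z (x + y) = ip z x + ip z y.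
Proof. by rewrite ipC ipDl rmorphD /= -!ipC. Qed.
Lemma ipZr a x z : ip z (a *: x) = a^* * ip z x.
Proof. by rewrite ipC ipZl rmorphM /= -ipC. Qed.
Lemma ipNr x z : ip z (- x) = - ip z x.
Proof. by rewrite ipC ipNl rmorphN /= -ipC. Qed.
Lemma ipBr x y z : ip z (x - y) = ip z x - ip z y.
Proof. by rewrite ipDr ipNr. Qed.
Lemma ip_real x : ip x x \is Num.real.
Proof. by apply/CrealP; rewrite -ipC. Qed.
Lemma ip_sum_l (I : Type) (r : seq I) (F : I -> X) z :
  ip (\sum_(i <- r) F i) z = \sum_(i <- r) ip (F i) z.
Proof.
elim: r => [|a r IH]; first by rewrite !big_nil ip0l.
by rewrite !big_cons ipDl IH.
Qed.

Lemma CS x y : (forall a b : C, 0 <= ip (a *: x + b *: y) (a *: x + b *: y)) ->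
  ip x y * (ip x y)^* <= ip x x * ip y y.
Proof.
move=> hpos.
set A := ip x x; set B := ip y y; set c := ip x y.
have hA : A^* = A by apply/CrealP/ip_real.
have hB : B^* = B by apply/CrealP/ip_real.
have hyx : ip y x = c^* by rewrite ipC.
have A0 : 0 <= A by have := hpos 1 0; rewrite scale0r addr0 scale1r.
have B0 : 0 <= B by have := hpos 0 1; rewrite scale0r add0r scale1r.
have expand a b : ip (a *: x + b *: y) (a *: x + b *: y) =
   a * a^* * A + a * b^* * c + b * a^* * c^* + b * b^* * B.
  rewrite !ipDl !ipDr !ipZl !ipZr -/A -/B -/c hyx; ring.
case: (boolP (A == 0)) => [/eqP Ae|An].
  case: (boolP (c == 0)) => [/eqP ->|cn]; first by rewrite mul0r Ae mul0r.
  exfalso.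
  have cc : 0 < c * c^* by rewrite mul_conjC_gt0.
  have qr : c * c^* \is Num.real by apply/ger0_real/ltW.
  have Br : B \is Num.real by apply/ger0_real.
  move: qr; set q := c * c^* => qr.
  set k := - ((B + 1) / (2 * q)).
  have hk : k^* = k.
    apply/CrealP; rewrite /k; move: (B) (q) Br qr => b q' hb hq.
    by rewrite rpredN rpredM ?rpredV ?rpredM ?rpredD ?rpred1 ?rpred_nat.
  have := hpos (k * c^*) 1; rewrite expand Ae !mulr0 add0r conjC1 !mulr1 !mul1r.
  rewrite rmorphM /= conjCK hk.
  have -> : k * c^* * c + k * c * c^* + B = -1.
    have -> : k * c^* * c + k * c * c^* = 2 * k * q by rewrite /q; ring.
    rewrite /k.
    have cnz : q != 0 by rewrite /q mul_conjC_eq0.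
    by field.
  by rewrite oppr_ge0 ler10.
have Apos : 0 < A by rewrite lt_def An A0.
have := hpos (- c^*) A; rewrite expand rmorphN /= conjCK hA.
have -> : - c^* * - c * A + - c^* * A * c + A * - c * c^* + A * A * B =
   A * (A * B - c * c^*) by ring.
by rewrite pmulr_rge0 // subr_ge0.
Qed.
End Form.
End Basics.
Section Riesz.
Variable R : realType.
Local Notation C := R[i].
Definition rc (r : R) : C := (r%:C)%C.
Lemma rcJ r : (rc r)^* = rc r.
Proof. apply/CrealP; apply/complex_realP; by exists r. Qed.
Lemma rc_lt a b : (rc a < rc b) = (a < b). Proof. exact: ltcR. Qed.
Lemma rc_le a b : (rc a <= rc b) = (a <= b). Proof. exact: lecR. Qed.
Lemma rcD a b : rc (a + b) = rc a + rc b. Proof. by rewrite /rc rmorphD. Qed.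
Lemma rcM a b : rc (a * b) = rc a * rc b. Proof. by rewrite /rc rmorphM. Qed.
Lemma rcN a : rc (- a) = - rc a. Proof. by rewrite /rc rmorphN. Qed.
Lemma rcV a : rc (a^-1) = (rc a)^-1. Proof. by rewrite /rc fmorphV. Qed.
Lemma rc_nat n : rc n%:R = n%:R. Proof. by rewrite /rc rmorph_nat. Qed.
Lemma rcRe (x : C) : x \is Num.real -> x = rc (complex.Re x).
Proof. by move=> /RRe_real. Qed.
Lemma rc_real r : rc r \is Num.real. Proof. by apply/CrealP/rcJ. Qed.

Lemma sqr_sum_le (a b : C) : (a + b) * (a + b)^* <= 2%:R * (a * a^*) + 2%:R * (b * b^*).
Proof.
have := mul_conjC_ge0 (a - b); rewrite -subr_ge0 => h.
rewrite -subr_ge0; set z := (X in 0 <= X).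
have -> : z = (a - b) * (a - b)^* by rewrite /z !rmorphD !rmorphN /=; ring.
exact: mul_conjC_ge0.
Qed.

Variables (X : lmodType C) (ip : X -> X -> C) (hip : hermitian_form ip).
Variables (S : X -> Prop) (S0 : S 0)
  (Slin : forall a x y, S x -> S y -> S (a *: x + y))
  (Spos : forall x, S x -> 0 <= ip x x) (Scomp : complete_on ip S).
Variables (phi : X -> C) (philin : forall a x y, phi (a *: x + y) = a * phi x + phi y).
Variables (M : R) (hM1 : 1 <= M)
  (hM : forall x, S x -> phi x * (phi x)^* <= rc M * ip x x).

Lemma SD x y : S x -> S y -> S (x + y).
Proof. by move=> hx hy; have := Slin 1 hx hy; rewrite scale1r. Qed.
Lemma SZ a x : S x -> S (a *: x).
Proof. by move=> hx; have := Slin a hx S0; rewrite addr0. Qed.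
Lemma SN x : S x -> S (- x).
Proof. by move=> hx; rewrite -scaleN1r; apply: SZ. Qed.
Lemma SB x y : S x -> S y -> S (x - y).
Proof. by move=> hx hy; apply: SD => //; apply: SN. Qed.

Lemma phi0 : phi 0 = 0.
Proof. have := philin 1 0 0; rewrite scale1r addr0 mul1r => h.
  apply: (addrI (phi 0)); by rewrite addr0 -h. Qed.
Lemma phiD x y : phi (x + y) = phi x + phi y.
Proof. by have := philin 1 x y; rewrite scale1r mul1r. Qed.
Lemma phiZ a x : phi (a *: x) = a * phi x.
Proof. by have := philin a x 0; rewrite addr0 phi0 addr0. Qed.

Definition Fc x := ip x x - phi x - (phi x)^*.
Lemma Fc_real x : Fc x \is Num.real.
Proof. apply/CrealP; rewrite /Fc !rmorphB /= conjCK -ipC //. ring. Qed.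
Definition Fr x := complex.Re (Fc x).
Lemma FcE x : Fc x = rc (Fr x).
Proof. exact/rcRe/Fc_real. Qed.

Lemma M0 : 0 < rc M.
Proof. have -> : (0 : C) = rc 0 by rewrite /rc rmorph0.
rewrite rc_lt; apply: lt_le_trans hM1; exact: ltr01. Qed.

Lemma Fc_lb x : S x -> - rc M <= Fc x.
Proof.
move=> hx; set p := phi x; set m := rc M.
have h1 : m * (p + p^*) <= p * p^* + m * m.
  have := mul_conjC_ge0 (p - m); rewrite -subr_ge0.
  have -> : (p - m) * (p - m)^* - 0 = p * p^* + m * m - m * (p + p^*).
    rewrite rmorphB /= rcJ; ring.
  by rewrite subr_ge0.
have h2 : m * (p + p^*) <= m * ip x x + m * m.
  apply: (le_trans h1); rewrite lerD2r; exact: hM.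
have h3 : p + p^* <= ip x x + m.
  by rewrite -(ler_pM2l M0) -/m (mulrDr m (ip x x)).
rewrite /Fc -/p -subr_ge0 (_ : _ - _ = ip x x + m - (p + p^*)); first by rewrite subr_ge0.
by rewrite opprK; ring.
Qed.

Definition E := fun r : R => exists x, S x /\ Fr x = r.
Lemma E_inf : classical_sets.has_inf E.
Proof.
split; first by exists (Fr 0), 0.
exists (- M) => r [x [hx <-]].
by rewrite -rc_le -FcE rcN; apply: Fc_lb.
Qed.
Definition d := inf E.
Lemma d_le x : S x -> rc d <= Fc x.
Proof.
move=> hx; rewrite FcE rc_le; case: E_inf => _ hl.
by apply: (ge_inf hl); exists x.
Qed.

Lemma seq_ex n : exists x, S x /\ Fc x < rc d + (n.+1%:R)^-1.
Proof.
have hp : 0 < (n.+1%:R : R)^-1 by rewrite invr_gt0 ltr0Sn.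
have [r [x [hx <-]] hr] := inf_adherent hp E_inf.
exists x; split => //; by rewrite FcE -rc_nat -rcV -rcD rc_lt.
Qed.
Definition u n := proj1_sig (constructive_indefinite_description _ (seq_ex n)).
Lemma uS n : S (u n). Proof. by rewrite /u; case: constructive_indefinite_description => x [] /=. Qed.
Lemma uF n : Fc (u n) < rc d + (n.+1%:R)^-1.
Proof. by rewrite /u; case: constructive_indefinite_description => x [] /=. Qed.

Lemma phiN x : phi (- x) = - phi x.
Proof. by rewrite -scaleN1r phiZ mulN1r. Qed.

Lemma mid_id x y : ip (x - y) (x - y) =
  2%:R * Fc x + 2%:R * Fc y - 4%:R * Fc ((2%:R)^-1 *: (x + y)).
Proof.
rewrite /Fc phiZ phiD !(ipZl hip, ipZr hip) !(ipDl hip, ipDr hip, ipBl hip, ipBr hip).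
have h2 : ((2%:R)^-1 : C)^* = (2%:R)^-1 by apply/CrealP; rewrite rpredV rpred_nat.
rewrite !rmorphM !rmorphD /= h2.
by field.
Qed.

Lemma cauchy m n : ip (u m - u n) (u m - u n) < 2%:R * (m.+1%:R)^-1 + 2%:R * (n.+1%:R)^-1.
Proof.
rewrite mid_id.
have hmid := d_le (SZ (2%:R^-1) (SD (uS m) (uS n))).
have h1 := uF m; have h2 := uF n.
set a := Fc (u m) in h1 *; set b := Fc (u n) in h2 *.
set c := Fc _ in hmid *.
have -> : 2%:R * (m.+1%:R)^-1 + 2%:R * (n.+1%:R)^-1 =
   2%:R * (rc d + (m.+1%:R)^-1) + 2%:R * (rc d + (n.+1%:R)^-1) - 4%:R * rc d :> C by ring.
apply: ltr_leD; first apply: ltr_leD.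
- by rewrite ltr_pM2l ?ltr0Sn.
- by rewrite ler_pM2l ?ltr0Sn // ltW.
- by rewrite lerN2 ler_pM2l ?ltr0Sn.
Qed.
Lemma arch (e k : R) : 0 < e -> 0 <= k ->
  exists N, forall n, (N <= n)%N -> k * (n.+1%:R)^-1 < e.
Proof.
move=> e0 k0; exists (Num.truncn (k / e)) => n hn.
have h := truncnS_gt (k / e).
have h2 : (Num.truncn (k / e)).+1%:R <= n.+1%:R :> R by rewrite ler_nat ltnS.
have h3 : k / e < n.+1%:R := lt_le_trans h h2.
rewrite ltr_pdivrMr ?ltr0Sn // mulrC -ltr_pdivrMr //.
Qed.

Lemma arch_C (e k : R) : 0 < e -> 0 <= k ->
  exists N, forall n, (N <= n)%N -> rc k * (n.+1%:R)^-1 < rc e.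
Proof.
move=> e0 k0; have [N hN] := arch e0 k0; exists N => n hn.
by rewrite -rc_nat -rcV -rcM rc_lt; apply: hN.
Qed.

Lemma u_cauchy : forall e : R, 0 < e -> exists N : nat, forall m n : nat, (N <= m)%N -> (N <= n)%N ->
        ip (u m - u n) (u m - u n) < rc e.
Proof.
move=> e e0.
have e2 : 0 < e / 2%:R by rewrite divr_gt0 ?ltr0Sn.
have [N hN] := arch_C e2 (ler0n _ 2).
exists N => m n hm hn.
apply: (lt_trans (cauchy m n)).
have -> : rc e = rc (e / 2%:R) + rc (e / 2%:R) by rewrite -rcD -splitr.
apply: ltrD; rewrite -(rc_nat 2); by apply: hN.
Qed.

Lemma lim_ex : exists w, S w /\ forall e : R, 0 < e -> exists N : nat, forall n : nat, (N <= n)%N ->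
        ip (u n - w) (u n - w) < rc e.
Proof. exact: (Scomp uS u_cauchy). Qed.

Lemma Fc_shift x v t : Fc (x + t *: v) =
  Fc x + t * (ip v x - phi v) + t^* * (ip x v - (phi v)^*) + t * t^* * ip v v.
Proof.
rewrite /Fc phiD phiZ !(ipDl hip, ipDr hip) !(ipZl hip, ipZr hip).
rewrite !rmorphD !rmorphM /=; ring.
Qed.

Lemma ip_ge0_real x : S x -> ip x x \is Num.real.
Proof. by move=> hx; apply/ger0_real/Spos. Qed.

Lemma var n v : S v ->
  (ip v (u n) - phi v) * (ip v (u n) - phi v)^* <= (ip v v + 1) * (n.+1%:R)^-1.
Proof.
move=> hv; set a := ip v (u n) - phi v; set V := ip v v; set q := a * a^*.
have V0 : 0 <= V := Spos hv.
have V1 : 0 < V + 1 by rewrite ltr_wpDl ?ltr01.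
set s := (V + 1)^-1.
have s0 : 0 < s by rewrite invr_gt0.
have sr : s^* = s by apply/CrealP; rewrite rpredV rpredD ?rpred1 ?ip_ge0_real.
have q0 : 0 <= q := mul_conjC_ge0 a.
have qr : q^* = q by apply/CrealP/ger0_real.
set t := - (s * a^*).
have h := d_le (Slin t hv (uS n)); rewrite addrC Fc_shift -/V in h.
have ha : ip (u n) v - (phi v)^* = a^* by rewrite /a rmorphB /= -ipC.
rewrite -/a ha in h.
have e1 : t * a + t^* * a^* + t * t^* * V = - (s * q) - s * s * q.
  rewrite /t rmorphN rmorphM /= sr conjCK /q.
  have sV : s * V = 1 - s by rewrite /s; field; rewrite gt_eqF.
  have -> : - (s * a^*) * a + - (s * a) * a^* + - (s * a^*) * - (s * a) * V =
    - (2%:R * s * (a * a^*)) + s * (s * V) * (a * a^*) by ring.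
  rewrite sV; ring.
have e2 : Fc (u n) + t * a + t^* * a^* + t * t^* * V = Fc (u n) - s * q - s * s * q.
  transitivity (Fc (u n) + (t * a + t^* * a^* + t * t^* * V)); first by ring.
  by rewrite e1; ring.
rewrite e2 in h.
have hu := uF n.
have h4 : 0 <= s * s * q by rewrite mulr_ge0 // mulr_ge0 // ltW.
have h' : rc d + (s * q + s * s * q) <= Fc (u n).
  rewrite (_ : rc d + _ = rc d + s * s * q + s * q); last by ring.
  by rewrite -!lerBrDr.
have h5 : s * q + s * s * q < (n.+1%:R)^-1.
  by rewrite -(ltrD2l (rc d)); apply: (le_lt_trans h').
have h6 : s * q < (n.+1%:R)^-1 by apply: le_lt_trans h5; rewrite lerDl.
have h7 : (V + 1) * (s * q) = q by rewrite /s; field; rewrite gt_eqF.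
by rewrite -h7 ltW // ltr_pM2l.
Qed.
Lemma rc1 : rc 1 = 1. Proof. by rewrite /rc rmorph1. Qed.
Lemma rc0 : rc 0 = 0. Proof. by rewrite /rc rmorph0. Qed.

Lemma repr_w w : S w ->
  (forall e : R, 0 < e -> exists N : nat, forall n : nat, (N <= n)%N ->
        ip (u n - w) (u n - w) < rc e) -> forall v, S v -> phi v = ip v w.
Proof.
move=> hw hc v hv.
apply/eqP; rewrite eq_sym -subr_eq0; apply/negPn/negP => bn.
set b := ip v w - phi v in bn.
set q := b * b^*.
have q0 : 0 < q by rewrite /q mul_conjC_gt0.
have qE : q = rc (complex.Re q) by apply/rcRe/ger0_real/ltW.
set qr := complex.Re q in qE.
have qr0 : 0 < qr by rewrite -rc_lt rc0 -qE.
set V := ip v v.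
have VE : V = rc (complex.Re V) by apply/rcRe/ip_ge0_real.
set Vr := complex.Re V in VE.
have Vr0 : 0 <= Vr by rewrite -rc_le rc0 -VE; apply: Spos.
have Vr1 : 0 < Vr + 1 by rewrite ltr_wpDl ?ltr01.
have q4 : 0 < qr / 4%:R by rewrite divr_gt0 ?ltr0Sn.
have e1 : 0 < qr / 4%:R / (Vr + 1) by rewrite divr_gt0.
have [N1 hN1] := hc _ e1.
have [N2 hN2] := arch_C q4 (ltW Vr1).
set n := maxn N1 N2.
have h1 := hN1 n (leq_maxl _ _).
have h2 := hN2 n (leq_maxr _ _).
have h3 := var n hv.
set a := ip v (u n) - phi v in h3.
set c := ip v (u n - w).
have hb : b = a + - c by rewrite /b /a /c (ipBr hip); ring.
have h4 := sqr_sum_le a (- c).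
rewrite -hb -/q rmorphN /= mulrNN in h4.
have hcs : c * c^* <= V * ip (u n - w) (u n - w).
  apply: CS => // a' b'; apply: Spos; apply: SD; apply: SZ => //.
  by apply: SB => //; apply: uS.
have d0 : 0 <= ip (u n - w) (u n - w) by apply: Spos; apply: SB => //; apply: uS.
have h5 : c * c^* < rc (qr / 4%:R).
  apply: (le_lt_trans hcs); apply: (le_lt_trans (y := (V + 1) * ip (u n - w) (u n - w))).
    by rewrite ler_wpM2r // lerDl ler01.
  rewrite VE -rc1 -rcD.
  rewrite (_ : rc (qr / 4%:R) = rc (Vr + 1) * rc (qr / 4%:R / (Vr + 1))).
    by rewrite ltr_pM2l // -rc0 rc_lt.
  by rewrite -rcM; congr rc; field; rewrite gt_eqF.
have h6 : a * a^* < rc (qr / 4%:R).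
  apply: (le_lt_trans h3); by rewrite -/V VE -rc1 -rcD.
have : q < q.
  apply: (le_lt_trans h4).
  rewrite [X in _ < X]qE (_ : rc qr = 2%:R * rc (qr / 4%:R) + 2%:R * rc (qr / 4%:R)).
    by apply: ltrD; rewrite ltr_pM2l ?ltr0Sn.
  by rewrite -rc_nat -!rcM -rcD; congr rc; field.
by rewrite ltxx.
Qed.

Lemma riesz_core : exists w, S w /\ forall x, S x -> phi x = ip x w.
Proof.
have [w [hw hc]] := lim_ex; exists w; split => //; exact: repr_w.
Qed.
End Riesz.

Lemma riesz (R : realType) (X : lmodType R[i]) (ip : X -> X -> R[i]) (hip : hermitian_form ip)
  (S : X -> Prop) (S0 : S 0)
  (Slin : forall a x y, S x -> S y -> S (a *: x + y))
  (Spos : forall x, S x -> 0 <= ip x x) (Scomp : complete_on ip S)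
  (phi : X -> R[i]) (philin : forall a x y, phi (a *: x + y) = a * phi x + phi y)
  (M : R) (hM : forall x, S x -> phi x * (phi x)^* <= rc M * ip x x) :
  exists w, S w /\ forall x, S x -> phi x = ip x w.
Proof.
apply: (@riesz_core R X ip hip S S0 Slin Spos Scomp phi philin (Num.max M 1)).
  by rewrite le_max lexx orbT.
move=> x hx; apply: (le_trans (hM x hx)); rewrite ler_wpM2r ?Spos // rc_le.
by rewrite le_max lexx.
Qed.
Section FinRiesz.
Variable R : realType.
Local Notation C := R[i].
Variables (X : lmodType C).

Definition inspan n (f : 'I_n -> X) x := exists c : 'I_n -> C, x = \sum_i c i *: f i.

Lemma inspan0 n (f : 'I_n -> X) : inspan f 0.
Proof. by exists (fun _ => 0); rewrite big1 // => i _; rewrite scale0r. Qed.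
Lemma inspanD n (f : 'I_n -> X) x y : inspan f x -> inspan f y -> inspan f (x + y).
Proof.
move=> [c ->] [c' ->]; exists (fun i => c i + c' i).
by rewrite -big_split /=; apply: eq_bigr => i _; rewrite scalerDl.
Qed.
Lemma inspanZ n (f : 'I_n -> X) a x : inspan f x -> inspan f (a *: x).
Proof.
move=> [c ->]; exists (fun i => a * c i).
by rewrite scaler_sumr; apply: eq_bigr => i _; rewrite scalerA.
Qed.

Definition ext n (c : 'I_n -> C) (cn : C) (i : 'I_n.+1) : C :=
  match @insub nat (fun k => k < n)%N _ (val i) with Some j => c j | None => cn end.

Lemma sum_ext n (f : 'I_n.+1 -> X) c cn :
  \sum_i ext c cn i *: f i = \sum_(i < n) c i *: f (widen_ord (leqnSn n) i) + cn *: f ord_max.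
Proof.
rewrite big_ord_recr /=; congr (_ + _).
  apply: eq_bigr => i _; rewrite /ext; case: insubP => [j hj ej|].
    by congr (_ *: _); congr c; apply: val_inj; rewrite ej.
  by rewrite /= ltn_ord.
rewrite /ext; case: insubP => [j hj ej|//].
by have := ltn_ord j; rewrite ej /= ltnn.
Qed.

Lemma riesz_fin (q : X -> X -> C) (hq : hermitian_form q) n : forall (f : 'I_n -> X)
  (phi : X -> C), (forall a x y, phi (a *: x + y) = a * phi x + phi y) ->
  (forall v, inspan f v -> v != 0 -> 0 < q v v) ->
  exists w, inspan f w /\ forall v, inspan f v -> phi v = q v w.
Proof.
elim: n => [|n IH] f phi philin hpos.
  exists 0; split; first exact: inspan0.
  move=> v [c ->]; rewrite big_ord0 (ip0r hq).
  have := philin 1 0 0; rewrite scale1r addr0 mul1r => h.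
  apply: (addrI (phi 0)); by rewrite addr0 -h.
pose f' := fun i : 'I_n => f (widen_ord (leqnSn n) i).
pose fn := f ord_max.
have sub' x : inspan f' x -> inspan f x.
  by move=> [c ->]; exists (ext c 0); rewrite sum_ext scale0r addr0.
have infn : inspan f fn.
  by exists (ext (fun _ => 0) 1); rewrite sum_ext scale1r big1 ?add0r // => i _; rewrite scale0r.
have dec v : inspan f v -> exists v' a, inspan f' v' /\ v = v' + a *: fn.
  by move=> [c ->]; rewrite big_ord_recr /=; eexists; exists (c ord_max); split => //; eexists.
have [w' [hw' repw']] := IH f' phi philin (fun v hv => hpos v (sub' v hv)).
have psilin : forall a x y, q (a *: x + y) fn = a * q x fn + q y fn by case: hq.
have [p [hp repp]] := IH f' (fun x => q x fn) psilin (fun v hv => hpos v (sub' v hv)).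
set g := fn - p.
have gorth x : inspan f' x -> q x g = 0.
  by move=> hx; rewrite (ipBr hq) repp // subrr.
have gorth' x : inspan f' x -> q g x = 0.
  by move=> hx; rewrite (ipC hq) gorth // conjC0.
have ing : inspan f g.
  by rewrite /g; apply: inspanD => //; rewrite -scaleN1r; apply: inspanZ; apply: sub'.
have phi0 : phi 0 = 0.
  have := philin 1 0 0; rewrite scale1r addr0 mul1r => h.
  apply: (addrI (phi 0)); by rewrite addr0 -h.
have phiD x y : phi (x + y) = phi x + phi y.
  by have := philin 1 x y; rewrite scale1r mul1r.
have phiZ a x : phi (a *: x) = a * phi x.
  by have := philin a x 0; rewrite addr0 phi0 addr0.
case: (boolP (g == 0)) => [/eqP g0|gn].
  have fnE : fn = p by apply/eqP; rewrite -subr_eq0 -/g g0.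
  exists w'; split; first exact: sub'.
  move=> v /dec [v' [a [hv' ->]]]; rewrite fnE; apply: repw'.
  by apply: inspanD => //; apply: inspanZ.
have gpos := hpos g ing gn.
set k := (phi g / q g g)^*.
exists (w' + k *: g); split.
  by apply: inspanD; [apply: sub' | apply: inspanZ].
move=> v /dec [v' [a [hv' ->]]].
have -> : v' + a *: fn = (v' + a *: p) + a *: g by rewrite /g scalerBr -addrA (addrC (a *: p)) subrK.
have hv'' : inspan f' (v' + a *: p) by apply: inspanD => //; apply: inspanZ.
clearbody g.
rewrite phiD phiZ (repw' _ hv'') !(ipDl hq, ipDr hq, ipZl hq, ipZr hq).
rewrite (gorth v') // (gorth p) // (gorth' w') // /k conjCK.
have gg : q g g != 0 by rewrite gt_eqF.
by field.
Qed.
End FinRiesz.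
Section Pont.
Variable R : realType.
Local Notation C := R[i].

Lemma adj_bounded (X : lmodType C) (j : X -> X -> C) (hj : hermitian_form j)
  (jpos : forall x, 0 <= j x x) (T S : X -> X) (hTS : forall x y, j (T x) y = j x (S y))
  (M : R) (hM : forall x, j (T x) (T x) <= rc M * j x x) :
  forall y, j (S y) (S y) <= rc (Num.max M 0) * j y y.
Proof.
move=> y; set a := S y.
have haa : j (T a) y = j a a by rewrite hTS.
have cs := CS hj (x := T a) (y := y) (fun _ _ => jpos _).
rewrite haa in cs.
have ar : (j a a)^* = j a a by apply/CrealP/ger0_real.
rewrite ar in cs.
have M0 : rc M <= rc (Num.max M 0) by rewrite rc_le le_max lexx.
have Mp : 0 <= rc (Num.max M 0) by rewrite -rc0 rc_le le_max lexx orbT.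
case: (boolP (j a a == 0)) => [/eqP ->|an].
  by rewrite mulr_ge0.
have apos : 0 < j a a by rewrite lt_def an jpos.
have h1 : j a a * j a a <= rc M * j a a * j y y.
  apply: (le_trans cs); rewrite ler_wpM2r //; exact: hM.
have h2 : j a a <= rc M * j y y.
  by rewrite -(ler_pM2l apos) mulrCA mulrA [j a a * _]mulrC.
apply: (le_trans h2); rewrite ler_wpM2r //.
Qed.

Variables (X : lmodType C) (ip : X -> X -> C) (hip : hermitian_form ip).
Variable (P : X -> X) (hP : fundamental_proj ip P).

Lemma Plin : lin_map P. Proof. by case: hP => [[]]. Qed.
Lemma PP x : P (P x) = P x. Proof. by case: hP => [[]]. Qed.
Lemma Porth x y : ip (P x) (y - P y) = 0. Proof. by case: hP. Qed.
Lemma Porth' x y : ip (y - P y) (P x) = 0. Proof. by rewrite (ipC hip) Porth conjC0. Qed.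
Lemma PBK x : P (x - P x) = 0. Proof. by rewrite (linB Plin) PP subrr. Qed.
Lemma ip_split x y : ip x y = ip (P x) (P y) + ip (x - P x) (y - P y).
Proof.
have -> : ip x y = ip (P x + (x - P x)) (P y + (y - P y)) by rewrite (addrC (P x)) (addrC (P y)) !subrK.
by rewrite (ipDl hip) !(ipDr hip (P y) (y - P y)) Porth Porth' addr0 add0r.
Qed.
Lemma Kp_ge0 x : 0 <= ip (P x) (P x).
Proof.
case: hP => _ _ h3 _ _; case: (boolP (P x == 0)) => [/eqP ->|hn].
  by rewrite (ip0l hip).
by apply/ltW/h3 => //; rewrite PP.
Qed.
Lemma Km_le0 x : ip (x - P x) (x - P x) <= 0.
Proof.
case: hP => _ _ _ [h4 _] _; case: (boolP (x - P x == 0)) => [/eqP ->|hn].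
  by rewrite (ip0l hip).
by apply/ltW/h4 => //; rewrite PBK.
Qed.

Definition jip x y := ip (P x) (P y) - ip (x - P x) (y - P y).
Lemma jip_herm : hermitian_form jip.
Proof.
split.
  move=> a x y z; rewrite /jip (Plin a x y) !(ipDl hip, ipZl hip, ipNl hip); ring.
by move=> x y; rewrite /jip rmorphB /= -!(ipC hip).
Qed.
Lemma jip_ge0 x : 0 <= jip x x.
Proof. by rewrite /jip subr_ge0; apply: le_trans (Km_le0 x) (Kp_ge0 x). Qed.
Lemma jnormE x : jnorm2 ip P x = jip x x. Proof. by []. Qed.

Lemma lin_sum (Y Z : lmodType C) (f : Y -> Z) (hf : lin_map f) n (c : 'I_n -> C) (e : 'I_n -> Y) :
  f (\sum_i c i *: e i) = \sum_i c i *: f (e i).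
Proof.
rewrite (big_morph f (linD hf) (lin0 hf)); apply: eq_bigr => i _; exact: linZ.
Qed.

Definition J x := P x *+ 2 - x.
Lemma J_lin : lin_map J.
Proof.
move=> a x y; rewrite /J (Plin a x y) mulrnDl scalerBr scalerMnr opprD addrACA.
by rewrite -!addrA; congr (_ + _); rewrite !addrA addrAC.
Qed.
Lemma PJ x : P (J x) = P x.
Proof. by rewrite /J (linB Plin) mulr2n (linD Plin) PP addrK. Qed.
Lemma JJ x : J (J x) = x.
Proof. by rewrite {1}/J PJ /J opprB addrC subrK. Qed.
Lemma jipJ x y : jip x y = ip x (J y).
Proof.
rewrite /J (ipBr hip) mulr2n (ipDr hip) (ip_split x (P y)) PP subrr (ip0r hip) addr0.
rewrite (ip_split x y) /jip; ring.
Qed.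
Lemma ipJ x z : ip x z = jip x (J z).
Proof. by rewrite jipJ JJ. Qed.
Lemma jipJJ u : jip (J u) (J u) = jip u u.
Proof.
rewrite {1}jipJ JJ (ipC hip) -jipJ; apply/CrealP/ger0_real/jip_ge0.
Qed.

Lemma nq : hermitian_form (fun a b => - ip a b).
Proof.
split; first by move=> a x y z; rewrite (ipDl hip) (ipZl hip); ring.
by move=> x y; rewrite (ipC hip) rmorphN.
Qed.

Lemma riesz_K (phi : X -> C) (philin : forall a x y, phi (a *: x + y) = a * phi x + phi y)
  (M : R) (hM : forall x, phi x * (phi x)^* <= rc M * jip x x) :
  exists w, forall x, phi x = ip x w.
Proof.
have phi0 : phi 0 = 0.
  have := philin 1 0 0; rewrite scale1r addr0 mul1r => h.
  apply: (addrI (phi 0)); by rewrite addr0 -h.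
have phiD x y : phi (x + y) = phi x + phi y.
  by have := philin 1 x y; rewrite scale1r mul1r.
case: hP => _ _ _ [h4 [n [e he]]] hcomp.
have [wp [hwp repp]] : exists w, P w = w /\ forall x, P x = x -> phi x = ip x w.
  apply: (@riesz R X ip hip (fun x => P x = x) _ _ _ hcomp phi philin M).
  - exact: (lin0 Plin).
  - by move=> a x y hx hy; rewrite (Plin a x y) hx hy.
  - by move=> x hx; rewrite -hx; apply: Kp_ge0.
  - move=> x hx; apply: (le_trans (hM x)); rewrite /jip hx subrr (ip0l hip) subr0.
    done.
pose f := fun i => e i - P (e i).
have Pf i : P (f i) = 0 by rewrite /f PBK.
have [wm [[cm hwm] repm]] : exists w, inspan f w /\ forall v, inspan f v -> phi v = - ip v w.
  apply: (riesz_fin nq) => //.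
  move=> v [c ->] vn; rewrite oppr_gt0; apply: h4 => //.
  by rewrite (lin_sum Plin) big1 // => i _; rewrite Pf scaler0.
have Pwm : P wm = 0 by rewrite hwm (lin_sum Plin) big1 // => i _; rewrite Pf scaler0.
exists (wp - wm) => x.
have [c hc] := he x.
have hxm : inspan f (x - P x).
  exists c; rewrite /f.
  have h0 : \sum_i c i *: P (e i) = 0 by rewrite -(lin_sum Plin) -hc PBK.
  rewrite -[LHS]subr0 -[in LHS]h0 hc -sumrB; apply: eq_bigr => i _; by rewrite scalerBr.
have -> : phi x = phi (P x) + phi (x - P x) by rewrite -phiD addrC subrK.
rewrite repp ?PP // repm // (ipBr hip).
rewrite (ip_split x wp) (ip_split x wm) hwp Pwm !subr0.
by rewrite subrr !(ip0r hip) addr0 add0r.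
Qed.

Lemma adj_ex_K (T : X -> X) (hT : lin_map T) (M : R)
  (hM : forall x, jip (T x) (T x) <= rc M * jip x x) : exists S, is_adj ip ip T S.
Proof.
have hy : forall y, exists w, forall x, ip (T x) y = ip x w.
  move=> y; apply: (@riesz_K (fun x => ip (T x) y) _ (2%:R * Num.max M 0 * complex.Re (jip y y))).
    by move=> a x z; rewrite (hT a x z) (ipDl hip) (ipZl hip).
  move=> x.
  have jyE : jip y y = rc (complex.Re (jip y y)) by apply/rcRe/ger0_real/jip_ge0.
  have Mp : rc M <= rc (Num.max M 0) by rewrite rc_le le_max lexx.
  have Mp0 : 0 <= rc (Num.max M 0) by rewrite -rc0 rc_le le_max lexx orbT.
  rewrite (ip_split (T x) y).
  set A := ip (P (T x)) (P y); set B := ip (T x - P (T x)) (y - P y).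
  have hA : A * A^* <= ip (P (T x)) (P (T x)) * ip (P y) (P y).
    apply: CS => // a b; rewrite -!(linZ Plin) -(linD Plin); exact: Kp_ge0.
  have hB : (- B) * (- B)^* <= (- ip (T x - P (T x)) (T x - P (T x))) * (- ip (y - P y) (y - P y)).
    have := CS nq (x := T x - P (T x)) (y := y - P y).
    apply => a b; rewrite oppr_ge0.
    have -> : a *: (T x - P (T x)) + b *: (y - P y) =
       (a *: T x + b *: y) - P (a *: T x + b *: y).
      by rewrite (linD Plin) !(linZ Plin) !scalerBr opprD addrACA.
    exact: Km_le0.
  rewrite rmorphN mulrNN in hB.
  have h1 := sqr_sum_le A B.
  apply: (le_trans h1).
  set a1 := ip (P (T x)) (P (T x)) in hA; set a2 := - ip (T x - P (T x)) (T x - P (T x)) in hB.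
  set b1 := ip (P y) (P y) in hA; set b2 := - ip (y - P y) (y - P y) in hB.
  have a10 : 0 <= a1 by apply: Kp_ge0.
  have b10 : 0 <= b1 by apply: Kp_ge0.
  have a20 : 0 <= a2 by rewrite oppr_ge0; apply: Km_le0.
  have b20 : 0 <= b2 by rewrite oppr_ge0; apply: Km_le0.
  have hT2 : a1 + a2 <= rc M * jip x x := hM x.
  have hJy : jip y y = b1 + b2 by [].
  apply: (le_trans (y := 2%:R * ((a1 + a2) * (b1 + b2)))).
    rewrite -mulrDr ler_pM2l ?ltr0Sn //.
    apply: (le_trans (lerD hA hB)).
    rewrite mulrDr !mulrDl -!addrA lerD2l addrA -subr_ge0 addrK addr_ge0 // mulr_ge0 //.
  set jr := complex.Re (jip y y) in jyE *.
  have jr0 : 0 <= rc jr by rewrite -jyE jip_ge0.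
  rewrite -hJy jyE !rcM rc_nat -!mulrA ler_pM2l ?ltr0Sn //.
  rewrite mulrCA (mulrC (a1 + a2)) ler_wpM2l //.
  apply: (le_trans hT2); rewrite ler_wpM2r // jip_ge0 //.
exists (fun y => proj1_sig (constructive_indefinite_description _ (hy y))).
move=> x y; by case: constructive_indefinite_description.
Qed.

Lemma adj_bounded_K (T S : X -> X) (hTS : is_adj ip ip T S) (M : R)
  (hM : forall x, jip (T x) (T x) <= rc M * jip x x) :
  forall y, jip (S y) (S y) <= rc (Num.max M 0) * jip y y.
Proof.
have hJ : forall x y, jip (T x) y = jip x (J (S (J y))).
  by move=> x y; rewrite jipJ hTS ipJ.
have := adj_bounded jip_herm jip_ge0 hJ hM.
move=> h y; have := h (J y); rewrite JJ jipJJ.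
by rewrite jipJJ.
Qed.
End Pont.

Section Gen.
Variable R : realType.
Local Notation C := R[i].

Lemma resolv_uniq (K : lmodType C) (A : K -> K -> Prop) z R1 R2 :
  is_resolvent A z R1 -> is_resolvent A z R2 -> R1 = R2.
Proof.
move=> [h11 h12] [h21 h22]; apply: functional_extensionality => k.
by have := h21 _ _ (h12 k); rewrite addrK.
Qed.
Lemma resolv_eq (K : lmodType C) (A : K -> K -> Prop) z R1 :
  is_resolvent A z R1 -> resolv A z = R1.
Proof.
move=> h; apply: (resolv_uniq _ h); rewrite /resolv.
by apply: epsilon_spec; exists R1.
Qed.
Lemma in_rho_resolv (K : lmodType C) ipK (A : K -> K -> Prop) z :
  in_rho ipK A z -> [/\ is_resolvent A z (resolv A z), lin_map (resolv A z) &
     bounded_KK ipK (resolv A z)].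
Proof. by move=> [R1 [h1 [h2 h3]]]; rewrite (resolv_eq h1). Qed.

Lemma inv_eq (X : Type) (f g : X -> X) : is_inv f g -> inv_op f = g.
Proof.
move=> h; have h' : is_inv f (inv_op f) by rewrite /inv_op; apply: epsilon_spec; exists g.
case: h => h1 h2; case: h' => h1' h2'; apply: functional_extensionality => x.
by rewrite -{1}(h2 x) h1'.
Qed.

Lemma adj_eq (X Y : lmodType C) (ipX : X -> X -> C) (ipY : Y -> Y -> C)
  (nd : forall u v, (forall x, ipX x u = ipX x v) -> u = v) f g :
  is_adj ipX ipY f g -> adj ipX ipY f = g.
Proof.
move=> h; have h' : is_adj ipX ipY f (adj ipX ipY f).
  by rewrite /adj; apply: epsilon_spec; exists g.
apply: functional_extensionality => y; apply: nd => x; by rewrite -h -h'.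
Qed.

Lemma adj_lin (X Y : lmodType C) (ipX : X -> X -> C) (ipY : Y -> Y -> C)
  (hX : hermitian_form ipX) (hY : hermitian_form ipY)
  (nd : forall u v, (forall x, ipX x u = ipX x v) -> u = v) f g :
  is_adj ipX ipY f g -> lin_map g.
Proof.
move=> h a y y'; apply: nd => x.
by rewrite -h (ipDr hY) (ipZr hY) !h (ipDr hX) (ipZr hX).
Qed.

Lemma adj_sym (X Y : lmodType C) (ipX : X -> X -> C) (ipY : Y -> Y -> C)
  (hX : hermitian_form ipX) (hY : hermitian_form ipY) f g :
  is_adj ipX ipY f g -> is_adj ipY ipX g f.
Proof. by move=> h y x; rewrite (ipC hX) -h -(ipC hY). Qed.

Lemma nd_pos (X : lmodType C) (ip : X -> X -> C) (hip : hermitian_form ip)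
  (pos : forall x, x != 0 -> 0 < ip x x) :
  forall u v, (forall x, ip x u = ip x v) -> u = v.
Proof.
move=> u v h; apply/eqP; rewrite -subr_eq0; apply/negPn/negP => hn.
have := pos _ hn; by rewrite (ipBr hip) h subrr ltxx.
Qed.

Lemma nd_K (X : lmodType C) (ip : X -> X -> C) (hip : hermitian_form ip) P
  (hP : fundamental_proj ip P) :
  forall u v, (forall x, ip x u = ip x v) -> u = v.
Proof.
move=> u v h; apply/eqP; rewrite -subr_eq0; set d := u - v.
have hd x : ip x d = 0 by rewrite (ipBr hip) h subrr.
case: (hP) => _ _ h3 [h4 _] _.
have Pd : P d = 0.
  apply/eqP/negPn/negP => hn.
  have := h3 _ (PP hP d) hn.
  have e : ip (P d) (P d) = ip (P d) d.
    by rewrite [RHS](ip_split hip hP) (PP hP) subrr (ip0l hip) addr0.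
  by rewrite e hd ltxx.
apply/negPn/negP => hn.
have := h4 _ Pd hn.
by rewrite hd ltxx.
Qed.

Lemma adj_ex_H (H : lmodType C) (ipH : H -> H -> C) (hH : hilbert ipH)
  (T : H -> H) (hT : lin_map T) (hb : bounded_HH ipH T) : exists S, is_adj ipH ipH T S.
Proof.
case: hH => hip pos comp; case: hb => M hM.
have ge0 x : 0 <= ipH x x.
  case: (boolP (x == 0)) => [/eqP ->|/pos /ltW //]; by rewrite (ip0l hip).
have hy y : exists w, forall x, ipH (T x) y = ipH x w.
  have philin : forall a x z, ipH (T (a *: x + z)) y = a * ipH (T x) y + ipH (T z) y.
    by move=> a x z; rewrite (hT a x z) (ipDl hip) (ipZl hip).
  have hb : forall x, True -> ipH (T x) y * (ipH (T x) y)^* <=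
      rc (Num.max M 0 * complex.Re (ipH y y)) * ipH x x.
    move=> x _.
    have yE : ipH y y = rc (complex.Re (ipH y y)) by apply/rcRe/ger0_real/ge0.
    set yr := complex.Re (ipH y y) in yE *.
    have cs := CS hip (x := T x) (y := y) (fun _ _ => ge0 _).
    apply: (le_trans cs); rewrite rcM mulrAC -yE ler_wpM2r ?ge0 //.
    apply: (le_trans (hM x)); rewrite ler_wpM2r ?ge0 // rc_le le_max lexx //.
  have [w [_ hw]] := @riesz R H ipH hip (fun _ => True) I (fun _ _ _ _ _ => I)
    (fun x _ => ge0 x) comp (fun x => ipH (T x) y) philin _ hb.
  by exists w => x; apply: hw.
exists (fun y => proj1_sig (constructive_indefinite_description _ (hy y))).
move=> x y; by case: constructive_indefinite_description.
Qed.
End Gen.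
Lemma modl (C' : numClosedFieldType) (V : lmodType C') (a : C') (p q r s : V) :
  p + a *: (q + (r + a *: s)) = (p + a *: r) + a *: (q + a *: s).
Proof.
rewrite !scalerDr !addrA; congr (_ + _); rewrite -!addrA; congr (_ + _); by rewrite addrC.
Qed.

Unset Implicit Arguments.
Theorem lemma3p8 (R : realType)
  (H : lmodType R[i]) (ipH : H -> H -> R[i]) (hH : hilbert ipH)
  (K : lmodType R[i]) (ipK : K -> K -> R[i]) (hK : pontryagin ipK)
  (A : K -> K -> Prop) (hAlin : linrel A) (hAsa : selfadjoint ipK A)
  (z0 : R[i]) (hz0 : 0 < 'Im z0) (hz0rho : in_rho ipK A z0)
  (Gam : H -> K) (hGlin : lin_map Gam) (hGbdd : bounded_HK ipH ipK Gam)
  (hGadj : has_adj ipH ipK Gam)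
  (Q : R[i] -> H -> H)
  (hQop : forall z, in_rho ipK A z -> lin_map (Q z) /\ bounded_HH ipH (Q z))
  (hQ0adj : has_adj ipH ipH (Q z0))
  (hQreal : forall z, in_rho ipK A z ->
     Q z = (fun h => adj ipH ipH (Q z0) h
                     + (z - z0^*) *: adj ipH ipK Gam (Gam_z A z0 Gam z h)))
  (hQ0inv : bdd_invertible ipH (Q z0))
  (Ah : K -> K -> Prop) (hAhlin : linrel Ah)
  (hAh : forall z, in_rho ipK A z -> bdd_invertible ipH (Q z) ->
     is_resolvent Ah z (fun k => resolv A z k
        + Gam_z A z0 Gam z (Qhat Q z (adj ipH ipK (Gam_z A z0 Gam z^*) k)))) :
  let Gamh : H -> K := fun h => Gam (Qhat Q z0 h) in
  forall z, in_rho ipK A z -> in_rho ipK Ah z -> bdd_invertible ipH (Q z) ->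
    Gam_z Ah z0 Gamh z = (fun h => Gam_z A z0 Gam z (Qhat Q z h)) /\
    resolv A z = (fun k => resolv Ah z k
        + Gam_z Ah z0 Gamh z (Q z (adj ipH ipK (Gam_z Ah z0 Gamh z^*) k))).
Proof.
move=> Gamh z hrz hrhz hinvz.
case: (hH) => hipH posH _.
have geH x : 0 <= ipH x x.
  case: (boolP (x == 0)) => [/eqP ->|/posH /ltW //]; by rewrite (ip0l hipH).
have ndH := nd_pos hipH posH.
have ndlH u v : (forall y, ipH u y = ipH v y) -> u = v.
  by move=> h; apply: ndH => x; rewrite (ipC hipH) h -(ipC hipH).
case: (hK) => hipK _.
case: (in_rho_resolv hrz) => resT linT [P [hP [M hM]]].
set T := resolv A z in resT linT hM.
have ndK := nd_K hipK hP.
have ndlK u v : (forall y, ipK u y = ipK v y) -> u = v.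
  by move=> h; apply: ndK => x; rewrite (ipC hipK) h -(ipC hipK).
have [S adjTS] := adj_ex_K hipK hP linT hM.
have linS := adj_lin hipK hipK ndK adjTS.
have adjST := adj_sym hipK hipK adjTS.
have bS := adj_bounded_K hipK hP adjTS hM.
have resS : is_resolvent A z^* S.
  split.
  - move=> f g hfg; apply: ndK => x.
    rewrite -adjTS (ipBr hipK) (ipZr hipK) conjCK.
    case: resT => _ resT2.
    have e := (hAsa f g).1 hfg (T x) (x + z *: T x) (resT2 x).
    by rewrite -e (ipDl hipK) (ipZl hipK); ring.
  - move=> k; apply/(hAsa (S k) (k + z^* *: S k)).2 => h h' hh'.
    rewrite (ipDr hipK) (ipZr hipK) conjCK.
    case: resT => resT1 _.
    have Th : T (h' - z *: h) = h := resT1 h h' hh'.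
    have e : ipK (h' - z *: h) (S k) = ipK h k by rewrite -adjTS Th.
    rewrite (ipBl hipK) (ipZl hipK) in e.
    by rewrite -e; ring.
have rhoS : in_rho ipK A z^*.
  exists S; split => //; split => //.
  exists P; split => //; exists (Num.max M 0) => y; exact: bS.
have resolvS : resolv A z^* = S := resolv_eq resS.
case: (hGadj) => Ga adjG.
have GaE : adj ipH ipK Gam = Ga := adj_eq ndH adjG.
have linGa := adj_lin hipH hipK ndH adjG.
have adjGs : forall u y, ipH (Ga u) y = ipK u (Gam y).
  by move=> u y; rewrite (adj_sym hipH hipK adjG).
have adjGz : is_adj ipH ipK (Gam_z A z0 Gam z) (fun k => Ga (k + (z^* - z0^*) *: S k)).
  move=> h k; rewrite /Gam_z -/T -adjG (ipDr hipK) (ipZr hipK) rmorphB /= !conjCK.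
  by rewrite (ipDl hipK) (ipZl hipK) adjTS.
have adjGzs : is_adj ipH ipK (Gam_z A z0 Gam z^*) (fun k => Ga (k + (z - z0^*) *: T k)).
  move=> h k; rewrite /Gam_z resolvS -adjG (ipDr hipK) (ipZr hipK) rmorphB /= !conjCK.
  by rewrite (ipDl hipK) (ipZl hipK) adjST.
have adjGzE := adj_eq ndH adjGz.
have adjGzsE := adj_eq ndH adjGzs.
case: (hQ0adj) => Q0a adjQ0.
have Q0aE : adj ipH ipH (Q z0) = Q0a := adj_eq ndH adjQ0.
have adjQ0s := adj_sym hipH hipH adjQ0.
have hQz h : Q z h = Q0a h + (z - z0^*) *: Ga (Gam h + (z - z0) *: T (Gam h)).
  by rewrite (hQreal z hrz) Q0aE GaE.
have hQzs h : Q z^* h = Q0a h + (z^* - z0^*) *: Ga (Gam h + (z^* - z0) *: S (Gam h)).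
  by rewrite (hQreal z^* rhoS) Q0aE GaE /Gam_z resolvS.
have hQ0 h : Q z0 h = Q0a h + (z0 - z0^*) *: Ga (Gam h).
  by rewrite (hQreal z0 hz0rho) Q0aE GaE /Gam_z subrr scale0r addr0.
have adjQ : is_adj ipH ipH (Q z) (Q z^*).
  move=> h h'; rewrite hQz hQzs (ipDl hipH) (ipZl hipH) adjQ0s hQ0.
  rewrite !(ipDr hipH) !(ipZr hipH) !adjGs.
  rewrite (ipC hipH (Ga _) h) adjGs -(ipC hipK).
  rewrite (ipC hipH (Ga _) h) adjGs -(ipC hipK).
  rewrite !(ipDl hipK, ipDr hipK, ipZl hipK, ipZr hipK) adjTS.
  rewrite !rmorphB /= !conjCK; ring.
case: (hinvz) => g [[gK1 gK2] [ling bg]].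
have invE : inv_op (Q z) = g by apply: inv_eq.
have [ga adjg] := adj_ex_H hH ling bg.
have linga := adj_lin hipH hipH ndH adjg.
have adjgs := adj_sym hipH hipH adjg.
have gaK1 : cancel (Q z^*) ga.
  move=> h; apply: ndH => x; by rewrite -adjg -adjQ gK2.
have gaK2 : cancel ga (Q z^*).
  move=> h; apply: ndH => x; by rewrite -adjQ -adjg gK1.
have invsE : inv_op (Q z^*) = ga by apply: inv_eq.
have binvs : bdd_invertible ipH (Q z^*).
  exists ga; split => //; split => //.
  case: bg => Mg hMg.
  exists (Num.max Mg 0); exact: (adj_bounded hipH geH adjg hMg).
case: (hQ0inv) => g0 [[g0K1 g0K2] _].
have inv0E : inv_op (Q z0) = g0 by apply: inv_eq.
have linQ0 := (hQop z0 hz0rho).1.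
have hRh k : resolv Ah z k = T k + (Gam (- g (Ga (k + (z - z0^*) *: T k))) +
    (z - z0) *: T (Gam (- g (Ga (k + (z - z0^*) *: T k))))).
  by rewrite (resolv_eq (hAh z hrz hinvz)) /Gam_z adjGzsE /Qhat invE.
have hRhs k : resolv Ah z^* k = S k + (Gam (- ga (Ga (k + (z^* - z0^*) *: S k))) +
    (z^* - z0) *: S (Gam (- ga (Ga (k + (z^* - z0^*) *: S k))))).
  have := resolv_eq (hAh z^* rhoS binvs); rewrite conjCK => ->.
  by rewrite /Gam_z resolvS adjGzE /Qhat invsE.
have claim1 : forall (w : R[i]) (Tw : K -> K) (gw : H -> H),
  lin_map Tw -> lin_map gw -> cancel gw (Q w) -> cancel (Q w) gw -> lin_map (Q w) ->
  (forall h, Q w h = Q0a h + (w - z0^*) *: Ga (Gam h + (w - z0) *: Tw (Gam h))) ->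
  (forall k, resolv Ah w k = Tw k + (Gam (- gw (Ga (k + (w - z0^*) *: Tw k))) +
    (w - z0) *: Tw (Gam (- gw (Ga (k + (w - z0^*) *: Tw k)))))) ->
  forall h, Gam_z Ah z0 Gamh w h = Gam (- gw h) + (w - z0) *: Tw (Gam (- gw h)).
  move=> w Tw gw linTw lingw c1 c2 linQw hQw hRw h.
  rewrite /Gam_z hRw /Gamh /Qhat inv0E.
  set v := - g0 h.
  have hv : - h = Q z0 v by rewrite /v (linN linQ0) g0K2.
  clearbody v.
  set X := Ga (Gam v + (w - z0^*) *: Tw (Gam v)).
  have star : v + (w - z0) *: - gw X = - gw h.
    apply: (can_inj c2).
    rewrite (linD linQw) (linZ linQw) !(linN linQw) !c1 hQw.
    rewrite hv hQ0 /X.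
    apply: ndlH => y.
    rewrite !(ipDl hipH, ipZl hipH, ipNl hipH) !adjGs !(ipDl hipK, ipZl hipK, ipNl hipK).
    ring.
  rewrite -star (linD hGlin) (linZ hGlin) (linD linTw) (linZ linTw).
  exact: modl.
have c1z := claim1 z T g linT ling gK2 gK1 (hQop z hrz).1 hQz hRh.
have c1zs := claim1 z^* S ga linS linga gaK2 gaK1 (hQop z^* rhoS).1 hQzs hRhs.
split.
  apply: functional_extensionality => h.
  by rewrite c1z /Gam_z /Qhat invE.
apply: functional_extensionality => k.
have adjGhs : is_adj ipH ipK (Gam_z Ah z0 Gamh z^*) (fun k => - g (Ga (k + (z - z0^*) *: T k))).
  move=> h k'; rewrite c1zs.
  have := adjGzs (- ga h) k'; rewrite /Gam_z resolvS => ->.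
  by rewrite (ipNl hipH) (ipNr hipH) adjgs.
rewrite (adj_eq ndH adjGhs) c1z hRh.
set X := Ga (k + (z - z0^*) *: T k).
rewrite (linN (hQop z hrz).1) gK2 (linN ling) opprK -/T.
rewrite (linN hGlin) (linN linT) scalerN -opprD.
by rewrite subrK.
Qed.
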